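(* Let $\theta_1<\theta_2$, $f\in C^1([\theta_1,\theta_2])$, $\gamma>1$, and let $I\subseteq[\theta_1,\theta_2]$ be a closed interval. Suppose that, for positive constants $A$ and $\alpha$ with $\alpha<2\gamma-2$, one of the following holds: $(f'(s))^2\ge A(s-\theta_1)^\alpha$ for all $s\in I$; or $(f'(s))^2\ge A(\theta_2-s)^\alpha$ for all $s\in I$. Then there is a constant $C>0$ depending only on $A,\alpha,\theta_1,\theta_2,\gamma$ such that $\int_I|f(s)|^{-1/\gamma}\,ds\le C$. *)

(* Defs.v *)
From HB Require Import structures.
From mathcomp Require Import all_boot all_order all_algebra.
From mathcomp Require Import all_classical all_reals all_analysis.
Set Implicit Arguments. Unset Strict Implicit. Unset Printing Implicit Defensive.

(* Main.v *)
Require Import Defs.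
From HB Require Import structures.
From mathcomp Require Import all_boot all_order all_algebra.
From mathcomp Require Import all_classical all_reals all_analysis.
From mathcomp Require Import ring lra measurable_realfun.
Import Order.TTheory GRing.Theory Num.Theory numFieldNormedType.Exports.
Local Open Scope classical_set_scope.
Local Open Scope ring_scope.

Section H.
Context {R : realType}.

Lemma powR_right0 (q s : R) : 0 < q -> (u - s) `^ q @[u --> s^'+] --> 0.
Proof.
move=> q0; have /cvgrPdist_lt H := powR_cvg0 q0.
apply/cvgrPdist_lt => e e0; have [d /= d0 Hd] := H e e0.
exists d => //= u /= Hu su; apply: Hd => /=.
  by rewrite /ball /= sub0r normrN -normrN opprB.
by rewrite subr_gt0.
Qed.

Lemma powR_left0 (q t : R) : 0 < q -> (t - u) `^ q @[u --> t^'-] --> 0.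
Proof.
move=> q0; have /cvgrPdist_lt H := powR_cvg0 q0.
apply/cvgrPdist_lt => e e0; have [d /= d0 Hd] := H e e0.
exists d => //= u /= Hu su; apply: Hd => /=.
  by rewrite /ball /= sub0r normrN.
by rewrite subr_gt0.
Qed.

Lemma is_derive_powR_shift (q s u : R) : s < u ->
  is_derive u 1 (fun v => (v - s) `^ q) (q * (u - s) `^ (q - 1)).
Proof.
move=> su.
have h1 : is_derive u 1 (fun v : R => v - s) 1 := is_derive_shift u 1 (-s).
have h2 : is_derive ((fun v : R => v - s) u) 1 (fun x : R => x `^ q) (q * (u - s) `^ (q - 1)).
  by apply: is_derive1_powR; rewrite subr_gt0.
have := @is_derive1_comp _ (fun x => x `^ q) (fun v => v - s) u _ _ h2 h1; rewrite mulr1.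
by [].
Qed.

Lemma is_derive_powR_rshift (q t u : R) : u < t ->
  is_derive u 1 (fun v => (t - v) `^ q) (- (q * (t - u) `^ (q - 1))).
Proof.
move=> ut.
have h1 : is_derive u 1 (fun v : R => t - v) (-1).
  have := is_deriveD (is_derive_cst t u 1) (is_deriveN (is_derive_id u 1)).
  by rewrite add0r.
have h2 : is_derive ((fun v : R => t - v) u) 1 (fun x : R => x `^ q) (q * (t - u) `^ (q - 1)).
  by apply: is_derive1_powR; rewrite subr_gt0.
have := @is_derive1_comp _ (fun x => x `^ q) (fun v => t - v) u _ _ h2 h1; rewrite mulrN1.
by [].
Qed.

Lemma is_derive_cont (f : R -> R) (x df : R) : is_derive x 1 f df -> f y @[y --> x] --> f x.
Proof. by move=> [d _]; exact/differentiable_continuous/derivable1_diffP. Qed.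

Lemma is_derive_cpowR_shift (c q s u : R) : s < u ->
  is_derive u 1 (fun v => c * (v - s) `^ q) (c * (q * (u - s) `^ (q - 1))).
Proof. by move=> su; have H := is_deriveZ c (is_derive_powR_shift q s u su); exact H. Qed.

Lemma is_derive_cpowR_rshift (c q t u : R) : u < t ->
  is_derive u 1 (fun v => c * (t - v) `^ q) (c * - (q * (t - u) `^ (q - 1))).
Proof. by move=> su; have H := is_deriveZ c (is_derive_powR_rshift q t u su); exact H. Qed.

Lemma growth1 (g dg : R -> R) (s t k q : R) : s < t -> 0 < q ->
  {within `[s, t], continuous g} ->
  (forall u, s < u < t -> is_derive u 1 g (dg u)) ->
  (forall u, s < u < t -> k * (u - s) `^ (q - 1) <= dg u) ->
  k / q * (t - s) `^ q <= g t - g s.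
Proof.
move=> st q0 cg dg_ hk.
pose phi u := g u - k / q * (u - s) `^ q.
pose dphi u := dg u - k / q * (q * (u - s) `^ (q - 1)).
have dphiP : forall u, u \in `]s, t[ -> is_derive u 1 phi (dphi u).
  move=> u; rewrite in_itv /= => /andP[su ut].
  apply: (@is_deriveB _ _ _ g (fun v => k / q * (v - s) `^ q)).
    by apply: dg_; rewrite su ut.
  have H := (is_deriveZ (k / q) (is_derive_powR_shift q s u su)).
  exact H.
have [_ gs gt] := (continuous_within_itvP _ st).1 cg.
have cphi : {within `[s, t], continuous phi}.
  apply/continuous_within_itvP => //; split.
  - move=> u uin; apply: differentiable_continuous; apply/derivable1_diffP.
    by have [] := dphiP u uin.
  - have -> : phi s = g s - k / q * 0 by rewrite /phi subrr powR0 ?gt_eqF.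
    apply: cvgB => //; apply: cvgM; first exact: cvg_cst.
    exact: powR_right0.
  - apply: cvgB => //; apply: cvg_at_left_filter.
    exact: is_derive_cont (is_derive_cpowR_shift (k / q) q s t st).
have [c cin E] := MVT st dphiP cphi.
have : 0 <= phi t - phi s.
  rewrite E; apply: mulr_ge0; last by rewrite subr_ge0 ltW.
  rewrite /dphi mulrA divfK ?gt_eqF // subr_ge0.
  by apply: hk; move: cin; rewrite in_itv.
rewrite /phi subrr powR0 ?gt_eqF // mulr0 subr0.
lra.
Qed.

Lemma growth2 (g dg : R -> R) (s t k q : R) : s < t -> 0 < q ->
  {within `[s, t], continuous g} ->
  (forall u, s < u < t -> is_derive u 1 g (dg u)) ->
  (forall u, s < u < t -> k * (t - u) `^ (q - 1) <= dg u) ->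
  k / q * (t - s) `^ q <= g t - g s.
Proof.
move=> st q0 cg dg_ hk.
pose phi u := g u + k / q * (t - u) `^ q.
pose dphi u := dg u + k / q * - (q * (t - u) `^ (q - 1)).
have dphiP : forall u, u \in `]s, t[ -> is_derive u 1 phi (dphi u).
  move=> u; rewrite in_itv /= => /andP[su ut].
  apply: (@is_deriveD _ _ _ g (fun v => k / q * (t - v) `^ q)).
    by apply: dg_; rewrite su ut.
  exact: is_derive_cpowR_rshift.
have [_ gs gt] := (continuous_within_itvP _ st).1 cg.
have cphi : {within `[s, t], continuous phi}.
  apply/continuous_within_itvP => //; split.
  - move=> u uin; apply: differentiable_continuous; apply/derivable1_diffP.
    by have [] := dphiP u uin.
  - apply: cvgD => //; apply: cvg_at_right_filter.
    exact: is_derive_cont (is_derive_cpowR_rshift (k / q) q t s st).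
  - have -> : phi t = g t + k / q * 0 by rewrite /phi subrr powR0 ?gt_eqF.
    apply: cvgD => //; apply: cvgM; first exact: cvg_cst.
    exact: powR_left0.
have [c cin E] := MVT st dphiP cphi.
have : 0 <= phi t - phi s.
  rewrite E; apply: mulr_ge0; last by rewrite subr_ge0 ltW.
  rewrite /dphi mulrN mulrA divfK ?gt_eqF // subr_ge0.
  by apply: hk; move: cin; rewrite in_itv.
rewrite /phi subrr powR0 ?gt_eqF // mulr0 addr0.
lra.
Qed.

Lemma ftcR (c u v p : R) : c < u -> u < v -> 0 < p < 1 ->
  (\int[lebesgue_measure]_(s in `[u, v]) ((s - c) `^ (- p))%:E
     <= ((v - c) `^ (1 - p) / (1 - p))%:E)%E.
Proof.
move=> cu uv /andP[p0 p1].
have p1' : 0 < 1 - p by rewrite subr_gt0.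
have dF : forall x, c < x -> is_derive x 1 (fun s => (1 - p)^-1 * (s - c) `^ (1 - p))
    ((1 - p)^-1 * ((1 - p) * (x - c) `^ (1 - p - 1))).
  by move=> x cx; exact: is_derive_cpowR_shift.
have df : forall x, c < x -> is_derive x 1 (fun s => (s - c) `^ (- p))
    ((- p) * (x - c) `^ (- p - 1)).
  by move=> x cx; exact: is_derive_powR_shift.
rewrite (@continuous_FTC2 _ _ (fun s => (1 - p)^-1 * (s - c) `^ (1 - p))) //.
- rewrite -EFinB lee_fin.
  have : 0 <= (1 - p)^-1 * (u - c) `^ (1 - p) by rewrite mulr_ge0 ?powR_ge0 // invr_ge0 ltW.
  rewrite [_ / _]mulrC; lra.
- apply: derivable_within_continuous => x; rewrite in_itv /= => /andP[ux _].
  by have [] := df x (lt_le_trans cu ux).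
- split.
  + move=> x; rewrite in_itv /= => /andP[ux _].
    by have [] := dF x (lt_trans cu ux).
  + by apply: cvg_at_right_filter; exact: is_derive_cont (dF u cu).
  + by apply: cvg_at_left_filter; exact: is_derive_cont (dF v (lt_trans cu uv)).
- move=> x; rewrite in_itv /= => /andP[ux _].
  rewrite derive1E; have [_ ->] := dF x (lt_trans cu ux).
  have -> : 1 - p - 1 = - p by ring.
  by rewrite mulrA mulVf ?gt_eqF // mul1r.
Qed.

Lemma ftcL (c u v p : R) : v < c -> u < v -> 0 < p < 1 ->
  (\int[lebesgue_measure]_(s in `[u, v]) ((c - s) `^ (- p))%:E
     <= ((c - u) `^ (1 - p) / (1 - p))%:E)%E.
Proof.
move=> vc uv /andP[p0 p1].
have p1' : 0 < 1 - p by rewrite subr_gt0.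
have dF : forall x, x < c -> is_derive x 1 (fun s => (- (1 - p)^-1) * (c - s) `^ (1 - p))
    ((- (1 - p)^-1) * - ((1 - p) * (c - x) `^ (1 - p - 1))).
  by move=> x cx; exact: is_derive_cpowR_rshift.
have df : forall x, x < c -> is_derive x 1 (fun s => (c - s) `^ (- p))
    (- ((- p) * (c - x) `^ (- p - 1))).
  by move=> x cx; exact: is_derive_powR_rshift.
rewrite (@continuous_FTC2 _ _ (fun s => (- (1 - p)^-1) * (c - s) `^ (1 - p))) //.
- rewrite -EFinB lee_fin.
  have : 0 <= (1 - p)^-1 * (c - v) `^ (1 - p) by rewrite mulr_ge0 ?powR_ge0 // invr_ge0 ltW.
  rewrite [_ / _]mulrC; lra.
- apply: derivable_within_continuous => x; rewrite in_itv /= => /andP[_ xv].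
  by have [] := df x (le_lt_trans xv vc).
- split.
  + move=> x; rewrite in_itv /= => /andP[_ xv].
    by have [] := dF x (lt_trans xv vc).
  + by apply: cvg_at_right_filter; exact: is_derive_cont (dF u (lt_trans uv vc)).
  + by apply: cvg_at_left_filter; exact: is_derive_cont (dF v vc).
- move=> x; rewrite in_itv /= => /andP[_ xv].
  rewrite derive1E; have [_ ->] := dF x (lt_trans xv vc).
  have -> : 1 - p - 1 = - p by ring.
  by rewrite mulrN mulNr opprK mulrA mulVf ?gt_eqF // mul1r.
Qed.

Lemma powR_anti (x y r : R) : 0 < x -> x <= y -> 0 <= r -> y `^ (- r) <= x `^ (- r).
Proof.
move=> x0 xy r0; rewrite !powRN lef_pV2 ?posrE ?powR_gt0 ?(lt_le_trans x0 xy) //.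
by rewrite ge0_ler_powR // nnegrE ltW // (lt_le_trans x0 xy).
Qed.

Lemma two_pow (y p : R) : 0 < y -> 2 `^ p * (2 * y) `^ (- p) = y `^ (- p).
Proof.
move=> y0; rewrite powRM ?ltW // mulrA [2 `^ (- p)]powRN mulfV ?mul1r //.
Qed.

Lemma inv_pow (a p : R) : 0 < a -> (a^-1) `^ (- p) = a `^ p.
Proof.
by move=> a0; rewrite -powR_inv1 ?ltW // -powRrM mulN1r opprK.
Qed.

Lemma half (F dist : R -> R) (u v c r q M : R) :
  0 < c -> 0 < r -> 0 < q ->
  measurable_fun `[u, v] F ->
  measurable_fun `[u, v] dist ->
  (forall s, u <= s <= v -> 0 <= dist s) ->
  (forall e, 0 < e -> e <= 1 ->
     (\int[lebesgue_measure]_(s in `[u, v]) ((dist s + e) `^ (- (q * r)))%:E <= M%:E)%E) ->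
  (forall s, u <= s <= v -> c * (dist s) `^ q <= `|F s|) ->
  (\int[lebesgue_measure]_(s in `[u, v]) (`|F s| `^ (- r))%:E
     <= (c `^ (- r) * 2 `^ (q * r) * M)%:E)%E.
Proof.
move=> c0 r0 q0 mF mdist dist0 hI hF.
set p := q * r.
have p0 : 0 < p by rewrite mulr_gt0.
set K := c `^ (- r).
have K0 : 0 < K by rewrite powR_gt0.
pose h s := `|F s| `^ (- r).
pose g n s := (Num.min (h s) (K * (n.+1%:R) `^ p))%:E.
have mD : measurable (`[u, v]%classic : set R) by [].
have mh : measurable_fun `[u, v] h.
  exact: measurableT_comp (measurable_powR _) (measurableT_comp (@normr_measurable _ setT) mF).
have mg n : measurable_fun `[u, v] (g n).
  apply/measurable_EFinP; apply: measurable_minr => //; exact: measurable_cst.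
have g0 n s : `[u, v]%classic s -> (0 <= g n s)%E.
  move=> _; rewrite lee_fin le_min powR_ge0 /=.
  by rewrite mulr_ge0 ?powR_ge0 // ltW.
have nd s : `[u, v]%classic s -> {homo g^~ s : n m / (n <= m)%N >-> (n <= m)%E}.
  move=> _ n m nm; rewrite lee_fin le_min ge_min lexx /= ge_min; apply/orP; right.
  rewrite ler_wpM2l ?(ltW K0) //; apply: ge0_ler_powR;
    [exact: ltW | by rewrite nnegrE ler0n | by rewrite nnegrE ler0n | by rewrite ler_nat].
have lim s : `[u, v]%classic s -> limn (g^~ s) = (h s)%:E.
  move=> _; apply/cvg_lim => //; apply: cvg_near_cst.
  set T := h s / K.
  have T0 : 0 <= T by rewrite divr_ge0 ?powR_ge0 // ltW.
  have T1 : 0 <= T `^ (p^-1) by rewrite powR_ge0.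
  pose N := Num.Def.archi_bound (T `^ (p^-1)).
  have HN := archi_boundP T1.
  near=> n.
  have nN : (N <= n)%N by near: n; exists N.
  congr (_%:E); apply: min_l.
  have -> : h s = K * T by rewrite /T mulrC divfK // gt_eqF.
  rewrite ler_wpM2l ?(ltW K0) //.
  have -> : T = (T `^ (p^-1)) `^ p by rewrite -powRrM mulVf ?gt_eqF // powRr1.
  apply: ge0_ler_powR; [exact: ltW | by rewrite nnegrE | by rewrite nnegrE ler0n | ].
  apply: (le_trans (ltW HN)); rewrite ler_nat; exact: (leq_trans nN).
have Hlim := @cvg_monotone_convergence _ _ R lebesgue_measure _ mD _ mg g0 nd.
have -> : (\int[lebesgue_measure]_(s in `[u, v]) (`|F s| `^ (- r))%:E)%E =
    (\int[lebesgue_measure]_(x in `[u, v]) (fun x0 => limn (g^~ x0)) x)%E.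
  by apply: eq_integral => s /[1!inE] Ds; rewrite lim.
rewrite -(cvg_lim _ Hlim) //.
apply: lime_le; first by apply/cvg_ex; eexists; exact: Hlim.
apply: nearW => n.
set e := (n.+1%:R)^-1 : R.
have e0 : 0 < e by rewrite invr_gt0.
have e1 : e <= 1 by rewrite invf_le1 // ler1n.
pose B s := (K * 2 `^ p * (dist s + e) `^ (- p))%:E.
have mB : measurable_fun `[u, v] B.
  apply/measurable_EFinP; apply: measurable_funM; first exact: measurable_cst.
  apply: measurableT_comp (measurable_powR _) _.
  by apply: measurable_funD => //; exact: measurable_cst.
apply: (@le_trans _ _ (\int[lebesgue_measure]_(s in `[u, v]) B s)%E).
  apply: (@ge0_le_integral _ _ R lebesgue_measure _ mD _ _ (g0 n) (mg n) mB) => s Ds.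
  have Hs : u <= s <= v by move: Ds; rewrite /= in_itv.
  have x0 := dist0 s Hs.
  rewrite /g /B lee_fin.
  set x := dist s.
  have [ex | xe] := leP e x.
  - have xpos : 0 < x := lt_le_trans e0 ex.
    rewrite ge_min; apply/orP; left.
    have hFs := hF s Hs.
    have cx : 0 < c * x `^ q by rewrite mulr_gt0 ?powR_gt0.
    rewrite /h; apply: (le_trans (powR_anti _ _ _ cx hFs (ltW r0))).
    rewrite (powRM _ (ltW c0) (powR_ge0 _ _)) -powRrM mulrN -/p.
    rewrite -mulrA ler_wpM2l ?(ltW K0) //.
    rewrite -(two_pow _ p xpos) ler_wpM2l ?powR_ge0 //.
    apply: powR_anti; [by rewrite addr_gt0 | lra | exact: ltW].
  - rewrite ge_min; apply/orP; right.
    rewrite -mulrA ler_wpM2l ?(ltW K0) //.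
    rewrite -(inv_pow _ p (ltr0Sn _ n)) -/e.
    rewrite -(two_pow _ p e0) ler_wpM2l ?powR_ge0 //.
    apply: powR_anti; [by rewrite ltr_wpDl | lra | exact: ltW].
rewrite /B; under eq_integral do rewrite EFinM.
rewrite ge0_integralZl_EFin //; first last.
- by rewrite mulr_ge0 ?powR_ge0 // ltW.
- apply/measurable_EFinP; apply: measurableT_comp (measurable_powR _) _.
  by apply: measurable_funD => //; exact: measurable_cst.
- by move=> s _; rewrite lee_fin powR_ge0.
rewrite [X in (_ <= X)%E]EFinM; apply: lee_wpmul2l; first by rewrite lee_fin mulr_ge0 ?powR_ge0 // ltW.
exact: hI.
Unshelve. all: by end_near.
Qed.

Lemma right_int (u v e p L : R) : u <= v -> v - u <= L -> 0 < e -> e <= 1 -> 0 < p < 1 ->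
  (\int[lebesgue_measure]_(s in `[u, v]) ((s - u + e) `^ (- p))%:E
     <= ((L + 1) `^ (1 - p) / (1 - p))%:E)%E.
Proof.
move=> uv vL e0 e1 /andP[p0 p1].
have p1' : 0 < 1 - p by rewrite subr_gt0.
have M0 : (0 <= (L + 1) `^ (1 - p) / (1 - p)) by rewrite divr_ge0 ?powR_ge0 // ltW.
move: uv; rewrite le_eqVlt => /predU1P[<-|uv].
  by rewrite set_itv1 integral_set1 lee_fin.
rewrite (_ : (fun s => ((s - u + e) `^ (- p))%:E) = (fun s => ((s - (u - e)) `^ (- p))%:E)); last first.
  by apply/funext => s; congr ((_ `^ _)%:E); ring.
have cu : u - e < u by rewrite ltrBlDr ltrDl.
apply: (le_trans (ftcR (u - e) u v p cu uv _)); first by rewrite p0.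
rewrite lee_fin ler_pM2r ?invr_gt0 //.
apply: ge0_ler_powR; [exact: ltW | | | ].
- by rewrite nnegrE; lra.
- by rewrite nnegrE; lra.
- lra.
Qed.

Lemma left_int (u v e p L : R) : u <= v -> v - u <= L -> 0 < e -> e <= 1 -> 0 < p < 1 ->
  (\int[lebesgue_measure]_(s in `[u, v]) ((v - s + e) `^ (- p))%:E
     <= ((L + 1) `^ (1 - p) / (1 - p))%:E)%E.
Proof.
move=> uv vL e0 e1 /andP[p0 p1].
have p1' : 0 < 1 - p by rewrite subr_gt0.
have M0 : (0 <= (L + 1) `^ (1 - p) / (1 - p)) by rewrite divr_ge0 ?powR_ge0 // ltW.
move: uv; rewrite le_eqVlt => /predU1P[<-|uv].
  by rewrite set_itv1 integral_set1 lee_fin.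
rewrite (_ : (fun s => ((v - s + e) `^ (- p))%:E) = (fun s => ((v + e - s) `^ (- p))%:E)); last first.
  by apply/funext => s; congr ((_ `^ _)%:E); ring.
have vc : v < v + e by rewrite ltrDl.
apply: (le_trans (ftcL (v + e) u v p vc uv _)); first by rewrite p0.
rewrite lee_fin ler_pM2r ?invr_gt0 //.
apply: ge0_ler_powR; [exact: ltW | | | ].
- by rewrite nnegrE; lra.
- by rewrite nnegrE; lra.
- lra.
Qed.

Lemma whole (F : R -> R) (a b z L c r q : R) :
  a <= z -> z <= b -> b - a <= L -> 0 < c -> 0 < r -> 0 < q -> q * r < 1 ->
  measurable_fun `[a, b] F ->
  (forall s, a <= s <= b -> c * `|s - z| `^ q <= `|F s|) ->
  (\int[lebesgue_measure]_(s in `[a, b]) (`|F s| `^ (- r))%:E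
    <= (2 * (c `^ (- r) * 2 `^ (q * r) * ((L + 1) `^ (1 - q * r) / (1 - q * r))))%:E)%E.
Proof.
move=> az zb bL c0 r0 q0 qr1 mF hF.
set M := (L + 1) `^ (1 - q * r) / (1 - q * r).
have p01 : 0 < q * r < 1 by rewrite qr1 mulr_gt0.
have E : `[a, b]%classic = `[a, z]%classic `|` `]z, b]%classic.
  by rewrite (@itv_bndbnd_setU _ _ _ (BRight z)) // bnd_simp.
have mF' := mF; rewrite E in mF'.
rewrite E ge0_integral_setU //; first last.
  apply/disj_setPS => s [] /=; rewrite !in_itv /=.
  by move=> /andP[_ sz] /andP[zs _]; move: (lt_le_trans zs sz); rewrite ltxx.
- apply/measurable_EFinP; exact: measurableT_comp (measurable_powR _) (measurableT_comp (@normr_measurable _ setT) mF').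
rewrite (_ : 2 * _ = c `^ (- r) * 2 `^ (q * r) * M + c `^ (- r) * 2 `^ (q * r) * M); last by ring.
rewrite EFinD; apply: leeD.
- apply: (@half F (fun s => z - s)) => //.
  + by apply: measurable_funS mF => //; apply: subset_itvl; rewrite bnd_simp.
  + by apply: measurable_funB => //; exact: measurable_cst.
  + by move=> s /andP[_ sz]; rewrite subr_ge0.
  + by move=> e e0 e1; apply: left_int => //; lra.
  + move=> s /andP[a_s sz]; rewrite -(ger0_norm (x := z - s)) ?subr_ge0 // distrC.
    by apply: hF; rewrite a_s (le_trans sz zb).
- apply: (@le_trans _ _ (\int[lebesgue_measure]_(s in `[z, b]) (`|F s| `^ (- r))%:E)%E).
    apply: ge0_subset_integral => //.
    + apply/measurable_EFinP; apply: measurableT_comp (measurable_powR _) (measurableT_comp (@normr_measurable _ setT) _).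
      by apply: measurable_funS mF => //; apply: subset_itvr; rewrite bnd_simp.
    + by move=> s /=; rewrite !in_itv /= => /andP[zs ->]; rewrite (ltW zs).
  apply: (@half F (fun s => s - z)) => //.
  + by apply: measurable_funS mF => //; apply: subset_itvr; rewrite bnd_simp.
  + by apply: measurable_funB => //; exact: measurable_cst.
  + by move=> s /andP[zs _]; rewrite subr_ge0.
  + by move=> e e0 e1; apply: right_int => //; lra.
  + move=> s /andP[zs sb]; rewrite -(ger0_norm (x := s - z)) ?subr_ge0 //.
    by apply: hF; rewrite sb (le_trans az zs).
Qed.

Lemma find_z (g : R -> R) (a b c q : R) : a <= b -> 0 < q -> 0 <= c ->
  {within `[a, b], continuous g} ->
  (forall s t, a <= s -> s <= t -> t <= b -> c * (t - s) `^ q <= g t - g s) ->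
  exists z, a <= z <= b /\ forall s, a <= s <= b -> c * `|s - z| `^ q <= `|g s|.
Proof.
move=> ab q0 c0 cg HG.
have [ga|ga] := leP 0 (g a).
  exists a; split; first by rewrite lexx ab.
  move=> s /andP[a_s sb]; rewrite ger0_norm ?subr_ge0 //.
  apply: (le_trans (HG _ _ (lexx a) a_s sb)).
  by apply: (le_trans _ (ler_norm _)); rewrite lerBlDr lerDl.
have [gb|gb] := leP (g b) 0.
  exists b; split; first by rewrite lexx ab.
  move=> s /andP[a_s sb]; rewrite distrC ger0_norm ?subr_ge0 //.
  apply: (le_trans (HG _ _ a_s sb (lexx b))).
  rewrite -normrN; apply: (le_trans _ (ler_norm _)); lra.
have [z zin gz] : exists2 z, z \in `[a, b] & g z = 0.
  apply: IVT => //; rewrite ge_min le_max; apply/andP; split; apply/orP.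
  - by left; exact: ltW.
  - by right; exact: ltW.
move: zin; rewrite in_itv /= => /andP[az zb].
exists z; split; first by rewrite az zb.
move=> s /andP[a_s sb].
have [zs|sz] := leP z s.
  rewrite ger0_norm ?subr_ge0 //.
  apply: (le_trans (HG _ _ az zs sb)); rewrite gz subr0; exact: ler_norm.
rewrite distrC ger0_norm; last by rewrite subr_ge0 ltW.
apply: (le_trans (HG _ _ a_s (ltW sz) zb)); rewrite gz sub0r -normrN; exact: ler_norm.
Qed.

Lemma core (g dg : R -> R) (t1 t2 a b k be : R) :
  t1 <= a -> a <= b -> b <= t2 -> 0 <= k -> 0 < be ->
  {within `[a, b], continuous g} ->
  (forall u, a < u < b -> is_derive u 1 g (dg u)) ->
  ((forall u, a < u < b -> k * (u - t1) `^ be <= dg u) \/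
   (forall u, a < u < b -> k * (t2 - u) `^ be <= dg u)) ->
  exists z, a <= z <= b /\
    forall s, a <= s <= b -> k / (be + 1) * `|s - z| `^ (be + 1) <= `|g s|.
Proof.
move=> t1a ab bt2 k0 be0 cg dg_ hw.
have q0 : 0 < be + 1 by rewrite addr_gt0.
apply: find_z => //; first by rewrite divr_ge0 // ltW.
move=> s t a_s st tb.
move: st; rewrite le_eqVlt => /predU1P[<-|st].
  by rewrite !subrr powR0 ?gt_eqF // mulr0.
have cst : {within `[s, t], continuous g}.
  apply: continuous_subspaceW cg => x /=; rewrite !in_itv /= => /andP[sx xt].
  by rewrite (le_trans a_s sx) (le_trans xt tb).
have dst : forall u, s < u < t -> is_derive u 1 g (dg u).
  by move=> u /andP[su ut]; apply: dg_; rewrite (le_lt_trans a_s su) (lt_le_trans ut tb).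
have Hq : be + 1 - 1 = be by rewrite addrK.
case: hw => hw.
- apply: growth1 => // u /andP[su ut]; rewrite Hq.
  apply: le_trans (hw u _); last by rewrite (le_lt_trans a_s su) (lt_le_trans ut tb).
  rewrite ler_wpM2l //; apply: ge0_ler_powR; [exact: ltW | | | ].
  + by rewrite nnegrE subr_ge0 ltW.
  + by rewrite nnegrE subr_ge0 (le_trans t1a) // (le_trans a_s) // ltW.
  + by rewrite lerD2l lerN2 (le_trans t1a).
- apply: growth2 => // u /andP[su ut]; rewrite Hq.
  apply: le_trans (hw u _); last by rewrite (le_lt_trans a_s su) (lt_le_trans ut tb).
  rewrite ler_wpM2l //; apply: ge0_ler_powR; [exact: ltW | | | ].
  + by rewrite nnegrE subr_ge0 ltW.
  + by rewrite nnegrE subr_ge0 (le_trans (ltW ut)) // (le_trans tb).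
  + by rewrite lerD2r (le_trans tb).
Qed.

Lemma sqrt_step (A w al d : R) : 0 <= A -> 0 <= w -> A * w `^ al <= d ^+ 2 ->
  Num.sqrt A * w `^ (al / 2) <= `|d|.
Proof.
move=> A0 w0 H.
rewrite -ler_sqr ?nnegrE ?mulr_ge0 ?sqrtr_ge0 ?powR_ge0 ?normr_ge0 //.
rewrite exprMn sqr_sqrtr // -powR_mulrn ?powR_ge0 // -powRrM -normrX ger0_norm ?sqr_ge0 //.
by rewrite divfK ?pnatr_eq0.
Qed.

Lemma ivt0 (d : R -> R) (x y : R) : x <= y -> {within `[x, y], continuous d} ->
  (d x <= 0 <= d y) \/ (d y <= 0 <= d x) -> exists2 z, z \in `[x, y] & d z = 0.
Proof.
move=> xy cd h; apply: IVT => //; rewrite ge_min le_max.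
by case: h => /andP[h1 h2]; rewrite h1 h2 ?orbT.
Qed.

Lemma sign_const (d : R -> R) (t1 t2 a b : R) : t1 <= a -> b <= t2 ->
  {within `[t1, t2], continuous d} -> (forall u, a < u < b -> d u != 0) ->
  (forall u, a < u < b -> 0 < d u) \/ (forall u, a < u < b -> d u < 0).
Proof.
move=> t1a bt2 cd nz.
case: (pselect (forall u, a < u < b -> 0 < d u)) => h; [by left | right].
have [u1 hu1 du1] : exists2 u1, a < u1 < b & d u1 < 0.
  move/existsNP: h => [u1 /not_implyP [hu1 /negP]]; rewrite -leNgt => du1.
  by exists u1 => //; rewrite lt_neqAle du1 (nz u1 hu1).
move=> u hu; rewrite ltNge; apply/negP => du.
have sub : forall x y, a < x -> y < b -> {within `[x, y], continuous d}.
  move=> x y ax yb; apply: continuous_subspaceW cd => v /=; rewrite !in_itv /=.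
  move=> /andP[xv vy]; apply/andP; split.
    exact: (le_trans t1a (ltW (lt_le_trans ax xv))).
  exact: (le_trans (ltW (le_lt_trans vy yb)) bt2).
move: hu hu1 => /andP[au ub] /andP[au1 u1b].
have [uu1|u1u] := leP u u1.
  have [z zin dz] := ivt0 d u u1 uu1 (sub _ _ au u1b) (or_intror (introT andP (conj (ltW du1) du))).
  move: zin; rewrite in_itv /= => /andP[uz zu1].
  by move: (nz z); rewrite (lt_le_trans au uz) (le_lt_trans zu1 u1b) dz eqxx => /(_ isT).
have [z zin dz] := ivt0 d u1 u (ltW u1u) (sub _ _ au1 ub) (or_introl (introT andP (conj (ltW du1) du))).
move: zin; rewrite in_itv /= => /andP[uz zu1].
by move: (nz z); rewrite (lt_le_trans au1 uz) (le_lt_trans zu1 ub) dz eqxx => /(_ isT).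
Qed.
End H.

Theorem lemma3p4 (R : realType) (theta1 theta2 gamma A alpha : R) :
  theta1 < theta2 -> 1 < gamma -> 0 < A -> 0 < alpha ->
  alpha < 2 * gamma - 2 ->
  exists C : R, 0 < C /\
    forall (f df : R -> R) (a b : R),
      (* f is C^1 on [theta1, theta2], with derivative df *)
      {within `[theta1, theta2], continuous f} ->
      {within `[theta1, theta2], continuous df} ->
      (forall x, theta1 < x < theta2 -> is_derive x 1 f (df x)) ->
      (* I = [a, b] is a closed subinterval of [theta1, theta2] *)
      theta1 <= a -> a <= b -> b <= theta2 ->
      ((forall s, a <= s <= b -> A * (s - theta1) `^ alpha <= (df s) ^+ 2) \/
       (forall s, a <= s <= b -> A * (theta2 - s) `^ alpha <= (df s) ^+ 2)) ->
      (\int[@lebesgue_measure R]_(s in `[a, b]) ((`|f s| `^ (- gamma^-1))%:E)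
         <= C%:E)%E.
Proof.
move=> t12 g1 A0 al0 alg.
have g0 : 0 < gamma by apply: lt_trans g1.
set be := alpha / 2.
set q := be + 1.
set r := gamma^-1.
set k := Num.sqrt A.
set c := k / q.
set L := theta2 - theta1.
have be0 : 0 < be by rewrite /be divr_gt0.
have q0 : 0 < q by rewrite /q addr_gt0.
have r0 : 0 < r by rewrite /r invr_gt0.
have k0 : 0 < k by rewrite /k sqrtr_gt0.
have c0 : 0 < c by rewrite /c divr_gt0.
have qr1 : q * r < 1.
  by rewrite /r ltr_pdivrMr // mul1r /q /be; lra.
exists (2 * (c `^ (- r) * 2 `^ (q * r) * ((L + 1) `^ (1 - q * r) / (1 - q * r)))).
split.
  rewrite mulr_gt0 // mulr_gt0 // ?mulr_gt0 ?powR_gt0 //.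
  by rewrite /L; lra.
  by rewrite invr_gt0 subr_gt0.
move=> f df a b cf cdf hd t1a ab bt2 hcase.
have habs : (forall u, a < u < b -> k * (u - theta1) `^ be <= `|df u|) \/
            (forall u, a < u < b -> k * (theta2 - u) `^ be <= `|df u|).
  case: hcase => h; [left | right] => u /andP[au ub];
    (apply: sqrt_step; [exact: ltW | rewrite subr_ge0; lra | apply: h; rewrite !ltW //]).
have nz : forall u, a < u < b -> df u != 0.
  move=> u hu; rewrite -normr_gt0.
  move: hu => /andP[au ub].
  case: habs => h; apply: lt_le_trans (h u _); rewrite ?au ?ub //;
    rewrite mulr_gt0 // powR_gt0 // subr_gt0; lra.
have cfab : {within `[a, b], continuous f}.
  apply: continuous_subspaceW cf => v /=; rewrite !in_itv /= => /andP[av vb].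
  by rewrite (le_trans t1a av) (le_trans vb bt2).
have hdab : forall u, a < u < b -> is_derive u 1 f (df u).
  by move=> u /andP[au ub]; apply: hd; rewrite (le_lt_trans t1a au) (lt_le_trans ub bt2).
have [z [zin hz]] : exists z, a <= z <= b /\
    forall s, a <= s <= b -> c * `|s - z| `^ q <= `|f s|.
  rewrite /c /q.
  have [hpos|hneg] := sign_const df theta1 theta2 a b t1a bt2 cdf nz.
  - apply: (@core _ f df theta1 theta2 a b k be) => //; first exact: ltW.
    by case: habs => h; [left|right] => u hu; rewrite -(gtr0_norm (hpos u hu)); apply: h.
  - have [z [zin hz]] : exists z, a <= z <= b /\
        forall s, a <= s <= b -> k / (be + 1) * `|s - z| `^ (be + 1) <= `|(- f) s|.
      apply: (@core _ (- f) (fun u => - df u) theta1 theta2 a b k be) => //.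
      + exact: ltW.
      + move=> x; apply: continuousN; exact: cfab.
      + by move=> u hu; apply: is_deriveN; apply: hdab.
      + by case: habs => h; [left|right] => u hu; rewrite -(ltr0_norm (hneg u hu)); apply: h.
    by exists z; split => // s hs; have := hz s hs; rewrite /= normrN.
move: zin => /andP[az zb].
apply: (@whole _ f a b z L c r q) => //.
- rewrite /L; lra.
- apply: measurable_funS (subspace_continuous_measurable_fun _ cf) => //.
  move=> v /=; rewrite !in_itv /= => /andP[av vb].
  by rewrite (le_trans t1a av) (le_trans vb bt2).
Qed.
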